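(* Let $\mathcal{T}=(V,A,E,f,q)$ be a decorated tree and let $\eta\in\mathrm{Cent}(\mathcal{T})$. There exists a unique decorated tree $\mathcal{T}^{(\eta)}$ satisfying: (i) $\mathcal{T}^{(\eta)}=(V,A,E,f,q^* )$ for some $q^*$; (ii) $q^*(e,\eta)=q(e,\eta)$ for all edges $e$ containing $\eta$; (iii) $q^*(e,v)=q(e,v)$ for all $v\in V\setminus\{\eta\}$ and all edges $e$ containing $v$ and not in $\gamma_{\eta,v}$; (iv) if $e=\{\eta,v\}$ is an edge with $v\in V$, then $q^*(e,v)=Q(e,v)-q(e,v)$; (v) if $e=\{u,v\}$ is an edge with $u,v\in V\setminus\{\eta\}$, then $\det^*(e)=-\det(e)$, where $\det(e)$ is computed in $\mathcal{T}$ and $\det^*(e)$ in $\mathcal{T}^{(\eta)}$. Moreover, $\mathcal{T}^{(\eta)}$ satisfies: (vi) if $v\in V\setminus\{\eta\}$ and $e$ is the unique edge in $\gamma_{\eta,v}$ containing $v$, then $Q(e,v)$ divides $q(e,v)+q^*(e,v)$.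
   Context: A graph is a pair $(X_0,X_1)$ of finite sets such that each element of $X_1$ (an edge) is a $2$-element subset of $X_0$; elements of $X_0$ are cells. A path is a tuple $(x_0,\dots,x_n)$ ($n\ge0$) of cells with $\{x_i,x_{i+1}\}$ an edge for each $i<n$, these edges pairwise distinct; a cell/edge is in the path if it is some $x_i$ / some $\{x_i,x_{i+1}\}$. The graph is a tree if any two cells $x,y$ are joined by a unique path $\gamma_{x,y}$. A decorated tree is $(V,A,E,f,q)$ with $V$ (vertices), $A$ (arrows) finite disjoint sets, $(V\cup A,E)$ a tree, every arrow contained in exactly one edge, $f:A\to\mathbb{Z}$, $q(e,x)\in\mathbb{Z}$ for each $e\in E$, $x\in e$, with $q(e,\alpha)=1$ for $\alpha\in A$, and for each $v\in V$ and distinct edges $e,e'\ni v$, $\gcd(q(e,v),q(e',v))=1$. For $x\in V\cup A$, $e\ni x$: $Q(e,x)=\prod q(e',x)$ over edges $e'\ne e$ containing $x$ (empty product $=1$); for an edge $e=\{x,y\}$, $\det(e)=q(e,x)q(e,y)-Q(e,x)Q(e,y)$. A path $(w_1,\dots,w_m)$ with $m\ge2$ satisfies $(+)$ if every edge $e\ni w_m$ other than $\{w_{m-1},w_m\}$ has $q(e,w_m)\ge1$ and at most one such edge has $q(e,w_m)>1$. An element $x\in V\cup A$ is central if $\gamma_{x,v}$ satisfies $(+)$ for every $v\in V\setminus\{x\}$; $\mathrm{Cent}(\mathcal{T})$ is the set of central elements. *)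

(* Defs.v *)
From mathcomp Require Import all_boot all_order all_algebra.
Set Implicit Arguments. Unset Strict Implicit. Unset Printing Implicit Defensive.
Import Order.TTheory GRing.Theory Num.Theory.
Local Open Scope ring_scope.

Section DecoratedTrees.
Variable T : finType.

(* Cells are the elements of V :|: A; edges E : {set {set T}};
   q is encoded as a function q e x : int (only relevant for e \in E, x \in e). *)

Definition pedges (p : seq T) : seq {set T} :=
  match p with
  | [::] => [::]
  | x :: s => pairmap (fun a b => [set a; b]) x s
  end.

Definition is_graph (C : {set T}) (E : {set {set T}}) : Prop :=
  forall e, e \in E -> #|e| = 2%N /\ e \subset C.

Definition is_path (C : {set T}) (E : {set {set T}}) (p : seq T) : bool :=
  [&& p != [::], all (fun x => x \in C) p,
      all (fun e => e \in E) (pedges p) & uniq (pedges p)].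

Definition path_from_to (C : {set T}) (E : {set {set T}}) (x y : T) (p : seq T) : Prop :=
  is_path C E p /\ head y p = x /\ last x p = y.

Definition is_tree (C : {set T}) (E : {set {set T}}) : Prop :=
  is_graph C E /\
  forall x y, x \in C -> y \in C -> exists! p, path_from_to C E x y p.

Definition Qf (E : {set {set T}}) (q : {set T} -> T -> int) (e : {set T}) (x : T) : int :=
  \prod_(e' in E | (x \in e') && (e' != e)) q e' x.

Definition detf (E : {set {set T}}) (q : {set T} -> T -> int) (x y : T) : int :=
  let e := [set x; y] in q e x * q e y - Qf E q e x * Qf E q e y.

Definition decorated (V A : {set T}) (E : {set {set T}}) (f : T -> int)
    (q : {set T} -> T -> int) : Prop :=
  [disjoint V & A] /\
  is_tree (V :|: A) E /\
  (forall a, a \in A -> #|[set e in E | a \in e]| = 1%N) /\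
  (forall a e, a \in A -> e \in E -> a \in e -> q e a = 1) /\
  (forall v e e', v \in V -> e \in E -> e' \in E -> v \in e -> v \in e' ->
     e != e' -> gcdz (q e v) (q e' v) = 1).

Definition plus_cond (E : {set {set T}}) (q : {set T} -> T -> int) (p : seq T) : Prop :=
  match p with
  | [::] => False
  | x :: s =>
      let wm := last x s in
      let le := last set0 (pedges p) in
      [/\ (0 < size s)%N,
           (forall e, e \in E -> wm \in e -> e != le -> (1 <= q e wm)%R) &
           (#|[set e in E | [&& wm \in e, e != le & (1 < q e wm)%R]]| <= 1)%N]
  end.

Definition central (V A : {set T}) (E : {set {set T}}) (q : {set T} -> T -> int)
    (x : T) : Prop :=
  x \in V :|: A /\
  forall v p, v \in V -> v != x -> path_from_to (V :|: A) E x v p -> plus_cond E q p.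
End DecoratedTrees.

(* Main.v *)
Require Import Defs.
From mathcomp Require Import all_boot all_order all_algebra.
From mathcomp Require Import ring zify.
From Stdlib Require Import ClassicalEpsilon.
Set Implicit Arguments. Unset Strict Implicit. Unset Printing Implicit Defensive.
Import Order.TTheory GRing.Theory Num.Theory.
Local Open Scope ring_scope.

Section Gen.
Variable T : finType.
Implicit Types (C : {set T}) (E : {set {set T}}).

Lemma pedges_rcons (y x : T) s :
  pedges (rcons (y :: s) x) = rcons (pedges (y :: s)) [set last y s; x].
Proof. by rewrite /= -cats1 pairmap_cat cats1. Qed.

Lemma pedges_cat (y : T) s1 s2 :
  pedges (y :: s1 ++ s2) = pedges (y :: s1) ++ pedges (last y s1 :: s2).
Proof. by rewrite /= pairmap_cat. Qed.

Lemma mem_pedges (y z : T) s e : e \in pedges (y :: s) -> z \in e -> z \in y :: s.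
Proof.
elim: s y => [|x s IH] y //=.
rewrite inE => /orP[/eqP-> | He]; first by rewrite !inE => /orP[->|->]; rewrite ?orbT.
by move=> Hz; rewrite inE (IH x He Hz) orbT.
Qed.

Lemma path_prefix C E (y : T) s1 s2 :
  is_path C E (y :: s1 ++ s2) -> is_path C E (y :: s1).
Proof.
case/and4P=> _ Hall He Hu; apply/and4P; split => //.
- by move: Hall; rewrite /= all_cat => /andP[] -> /andP[].
- by move: He; rewrite pedges_cat all_cat => /andP[].
- by move: Hu; rewrite pedges_cat cat_uniq => /andP[].
Qed.

Lemma path_rcons C E (y x : T) s :
  is_path C E (y :: s) -> x \in C -> [set last y s; x] \in E ->
  [set last y s; x] \notin pedges (y :: s) -> is_path C E (rcons (y :: s) x).
Proof.
case/and4P=> _ Hall He Hu Hx HE Hn; apply/and4P; split => //.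
- by rewrite -cats1 all_cat Hall /= Hx.
- by rewrite pedges_rcons -cats1 all_cat He /= HE.
- by rewrite pedges_rcons rcons_uniq Hn Hu.
Qed.

Lemma set2_eq (a b c : T) : [set a; b] = [set c; b] -> a != b -> a = c.
Proof.
move=> H ab; have : a \in [set c; b] by rewrite -H set21.
by rewrite !inE (negbTE ab) orbF => /eqP.
Qed.

Lemma Qf_eq E (g1 g2 : {set T} -> T -> int) e x :
  (forall e', e' \in E -> x \in e' -> e' != e -> g1 e' x = g2 e' x) ->
  Qf E g1 e x = Qf E g2 e x.
Proof. by move=> H; apply: eq_bigr => i /andP[Hi /andP[Hx Hn]]; apply: H. Qed.

Lemma Qf_split E (g : {set T} -> T -> int) e1 e2 x :
  e1 \in E -> x \in e1 -> e1 != e2 ->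
  Qf E g e2 x = g e1 x * \prod_(e' in E | [&& x \in e', e' != e1 & e' != e2]) g e' x.
Proof.
move=> H1 Hx Hn; rewrite /Qf (bigD1 e1) /=; last by rewrite H1 Hx Hn.
congr (_ * _); apply: eq_bigl => i.
by case: (i \in E); case: (x \in i); case: (i != e1); case: (i != e2).
Qed.

Lemma detfC E (g : {set T} -> T -> int) u v : detf E g u v = detf E g v u.
Proof. by rewrite /detf setUC (mulrC (g _ u)) (mulrC (Qf _ _ _ u)). Qed.

End Gen.

Section Tree.
Variables (T : finType) (V A : {set T}) (E : {set {set T}}) (eta : T).
Local Notation C := (V :|: A).
Hypothesis tree : is_tree C E.
Hypothesis etaC : eta \in C.

Definition gam (v : T) : seq T :=
  epsilon (inhabits [::]) (fun p => path_from_to C E eta v p).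

Lemma gamP v : v \in C -> path_from_to C E eta v (gam v).
Proof.
move=> vC; rewrite /gam; apply: epsilon_spec.
by have [p [Hp _]] := tree.2 eta v etaC vC; exists p.
Qed.

Lemma gam_uniq v p : v \in C -> path_from_to C E eta v p -> p = gam v.
Proof.
move=> vC Hp; have [p0 [_ Hu]] := tree.2 eta v etaC vC.
by rewrite -(Hu _ Hp) (Hu _ (gamP vC)).
Qed.

Lemma gam_eta : gam eta = [:: eta].
Proof. by symmetry; apply: gam_uniq => //; rewrite /path_from_to /is_path /= etaC. Qed.

Lemma gam_cons v : v \in C -> exists s, gam v = eta :: s.
Proof.
move=> vC; have [/and4P[H0 _ _ _] [Hh _]] := gamP vC.
by move: H0 Hh; case: (gam v) => // y s _ /= ->; exists s.
Qed.

Lemma gam_last v : v \in C -> last eta (gam v) = v.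
Proof. by move=> vC; have [_ [_ ->]] := gamP vC. Qed.

Lemma gam_mem v : v \in C -> v \in gam v.
Proof.
move=> vC; have [s Hs] := gam_cons vC.
by have := gam_last vC; rewrite Hs /= => {1}<-; apply: mem_last.
Qed.

Lemma gam_split v : v \in C -> v != eta -> exists u,
  [/\ gam v = rcons (gam u) v, u \in C, [set u; v] \in E & v \notin gam u].
Proof.
move=> vC vn; have [s Hs] := gam_cons vC.
have [Hp [_ Hl]] := gamP vC; rewrite Hs /= in Hl.
move: Hs Hp Hl; case/lastP: s => [|s' x] Hs Hp Hl.
  by move: vn; rewrite -Hl /= eqxx.
rewrite last_rcons in Hl; subst x.
have Hp' : is_path C E (eta :: s') by apply: (@path_prefix _ C E eta s' [:: v]); rewrite cats1 -Hs.
set u := last eta s'.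
have Hu : path_from_to C E eta u (eta :: s') by [].
have uC : u \in C.
  by case/and4P: Hp' => _ /allP H _ _; apply: H; apply: mem_last.
have Hg := gam_uniq uC Hu.
exists u; split => //.
- by rewrite Hs -Hg.
- by case/and4P: Hp => _ _ /allP H _; apply: H; rewrite Hs -rcons_cons pedges_rcons mem_rcons mem_head.
- rewrite -Hg; clear Hg Hu uC Hp'; clear u; apply/negP => Hin.
  move: Hs Hp; case/splitPl: Hin => p1 p2 Hl1 Hs Hp.
  have Hp1 : path_from_to C E eta v (eta :: p1).
    split; last by [].
    apply: (@path_prefix _ C E eta p1 p2).
    apply: (@path_prefix _ C E eta (p1 ++ p2) [:: v]); rewrite cats1 -Hs //.
  have := gam_uniq vC Hp1; rewrite Hs => -[] /(congr1 size).
  rewrite size_rcons size_cat; lia.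
Qed.


Definition par v := head eta (behead (rev (gam v))).

Lemma head_rev (x : T) s : head x (rev s) = last x s.
Proof. by case/lastP: s => //= s y; rewrite rev_rcons last_rcons. Qed.

Lemma par_of v u : u \in C -> gam v = rcons (gam u) v -> par v = u.
Proof. by move=> uC H; rewrite /par H rev_rcons /= head_rev gam_last. Qed.

Lemma par_spec v : v \in C -> v != eta ->
  [/\ gam v = rcons (gam (par v)) v, par v \in C, [set par v; v] \in E
    & v \notin gam (par v)].
Proof.
move=> vC vn; have [u [H1 H2 H3 H4]] := gam_split vC vn.
by rewrite (par_of H2 H1).
Qed.

Lemma edge_C e x : e \in E -> x \in e -> x \in C.
Proof. by move=> He Hx; have [_ /subsetP] := tree.1 e He; apply. Qed.

Lemma edge_neq x : [set x; x] \notin E.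
Proof.
apply/negP => H; have [H2 _] := tree.1 _ H.
by move: H2; rewrite setUid cards1.
Qed.

Lemma edge_eq e v w : e \in E -> v \in e -> w \in e -> v != w -> e = [set v; w].
Proof.
move=> He Hv Hw vw; apply/eqP; rewrite eq_sym eqEcard; apply/andP; split.
  by apply/subsetP => x; rewrite !inE => /orP[/eqP->|/eqP->].
by have [-> _] := tree.1 e He; rewrite cards2 vw.
Qed.

Lemma par_neq v : v \in C -> v != eta -> par v != v.
Proof.
move=> vC vn; have [_ H2 _ H4] := par_spec vC vn.
by apply/eqP => Heq; move: H4; rewrite -{1}Heq gam_mem.
Qed.

Lemma edge_gam_last v e : v \in C -> v != eta -> e \in pedges (gam v) -> v \in e ->
  e = [set par v; v].
Proof.
move=> vC vn; have [H1 H2 H3 H4] := par_spec vC vn.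
have [s Hs] := gam_cons H2.
have Hl := gam_last H2; rewrite Hs /= in Hl.
rewrite H1 Hs pedges_rcons mem_rcons inE Hl => /orP[/eqP -> //| He] Hv.
by move: H4; rewrite Hs (mem_pedges He Hv).
Qed.

Lemma lastedge_in v : v \in C -> v != eta -> [set par v; v] \in pedges (gam v).
Proof.
move=> vC vn; have [H1 H2 H3 H4] := par_spec vC vn.
have [s Hs] := gam_cons H2.
have Hl := gam_last H2; rewrite Hs /= in Hl.
by rewrite H1 Hs pedges_rcons mem_rcons Hl mem_head.
Qed.

Lemma child v w e : v \in C -> e \in E -> v \in e -> w \in e -> w != v ->
  (v == eta) || (e != [set par v; v]) ->
  [/\ gam w = rcons (gam v) w, w != eta, par w = v & e = [set v; w]].
Proof.
move=> vC He Hv Hw wv Hor.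
have Hvw : e = [set v; w] by apply: edge_eq => //; rewrite eq_sym.
have wC : w \in C by apply: edge_C Hw.
have Hn : e \notin pedges (gam v).
  apply/negP => Hin; case/orP: Hor => [/eqP Hve | Hne].
    by move: Hin; rewrite Hve gam_eta.
  by move: Hne; rewrite (edge_gam_last vC _ Hin Hv) ?eqxx //; apply/negP => /eqP Hve;
     move: Hin; rewrite Hve gam_eta.
have [s Hs] := gam_cons vC.
have Hl := gam_last vC; rewrite Hs /= in Hl.
have Hp : path_from_to C E eta w (rcons (gam v) w).
  split; last by rewrite Hs /= last_rcons.
  rewrite Hs; apply: path_rcons; rewrite ?Hl -?Hvw -?Hs //.
  by have [] := gamP vC.
have Hg := gam_uniq wC Hp.
have wn : w != eta.
  apply/eqP => Hwe; move: Hg; rewrite Hwe gam_eta Hs => /(congr1 size).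
  by rewrite /= size_rcons.
by split => //; exact: par_of.
Qed.

Lemma eu_neq v : v \in C -> v != eta -> par v != eta ->
  [set par (par v); par v] != [set par v; v].
Proof.
move=> vC vn pn; have [H1 H2 H3 H4] := par_spec vC vn.
have [G1 G2 G3 G4] := par_spec H2 pn.
apply/eqP => Heq; have : v \in [set par (par v); par v] by rewrite Heq set22.
rewrite !inE => /orP[/eqP Hv | /eqP Hv].
  by move: H4; rewrite G1 mem_rcons inE -Hv (gam_mem vC) orbT.
by move: (par_neq vC vn); rewrite -Hv eqxx.
Qed.

End Tree.

Section Main.
Variables (T : finType) (V A : {set T}) (E : {set {set T}}) (f : T -> int)
  (q : {set T} -> T -> int) (eta : T).
Local Notation C := (V :|: A).
Hypothesis Hdec : decorated V A E f q.
Hypothesis Hcent : central V A E q eta.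

Let tree : is_tree C E := Hdec.2.1.
Let etaC : eta \in C := Hcent.1.
Local Notation gam := (gam V A E eta).
Local Notation par := (par V A E eta).

Definition upd (g : {set T} -> T -> int) e0 x0 (a : int) :=
  fun e x => if (e == e0) && (x == x0) then a else g e x.

Definition step (a : int) (w u v : T) : int :=
  divz (Qf E (upd q [set w; u] u a) [set u; v] u * Qf E q [set u; v] v - detf E q u v)
       (q [set u; v] u).

Fixpoint val (r : seq T) : int :=
  match r with
  | v :: r2 =>
    match r2 with
    | u :: r1 =>
      match r1 with
      | [::] => Qf E q [set u; v] v - q [set u; v] v
      | w :: _ => step (val r2) w u v
      end
    | [::] => 0
    end
  | [::] => 0
  end.

Definition qval v := val (rev (gam v)).

Definition qs e x := if [&& x \in V, x != eta & e == [set par x; x]] then qval x else q e x.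

Lemma par_V v : v \in C -> v != eta -> par v != eta -> par v \in V.
Proof.
move=> vC vn pn; have [H1 H2 H3 H4] := par_spec tree etaC vC vn.
have [G1 G2 G3 G4] := par_spec tree etaC H2 pn.
have := H2; rewrite inE => /orP[// | uA].
have [_ [_ [Har _]]] := Hdec.
have := Har _ uA.
have Hne := eu_neq tree etaC vC vn pn.
have : [set [set par (par v); par v]; [set par v; v]] \subset [set e in E | par v \in e].
  by apply/subsetP => x; rewrite !inE => /orP[/eqP->|/eqP->]; rewrite ?G3 ?H3 ?set22 ?set21.
move=> /subset_leq_card; rewrite cards2 Hne => + H; rewrite H.
by [].
Qed.

Lemma q_pos u e : u \in V -> u != eta -> e \in E -> u \in e -> e != [set par u; u] ->
  q e u != 0.
Proof.
move=> uV un He Hu Hne.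
have uC : u \in C by rewrite inE uV.
have [G1 G2 G3 G4] := par_spec tree etaC uC un.
have [s Hs] := gam_cons tree etaC G2.
have Hl := gam_last tree etaC G2; rewrite Hs /= in Hl.
have := Hcent.2 u (gam u) uV un (gamP tree etaC uC).
rewrite G1 Hs /= !last_rcons -cats1 pairmap_cat last_cat /= Hl.
case=> _ Hpos _; have := Hpos e He Hu Hne.
by apply: contraL => /eqP->.
Qed.

Lemma qval_rec1 v : v \in C -> v != eta -> par v = eta ->
  qval v = Qf E q [set eta; v] v - q [set eta; v] v.
Proof.
move=> vC vn Hp; have [H1 _ _ _] := par_spec tree etaC vC vn.
by rewrite /qval H1 Hp gam_eta.
Qed.

Lemma gam_rcons w : w \in C -> exists s, gam w = rcons s w.
Proof.
move=> wC; have [s0 Hs0] := gam_cons tree etaC wC.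
have Hl := gam_last tree etaC wC.
move: Hl; case/lastP: (gam w) Hs0 => [//|s x] _; rewrite last_rcons => ->.
by exists s.
Qed.

Lemma qval_rec2 v : v \in C -> v != eta -> par v != eta ->
  qval v = step (qval (par v)) (par (par v)) (par v) v.
Proof.
move=> vC vn pn; have [H1 H2 _ _] := par_spec tree etaC vC vn.
have [G1 G2 _ _] := par_spec tree etaC H2 pn.
have [s Hs] := gam_rcons G2.
by rewrite /qval H1 G1 Hs !rev_rcons.
Qed.

Lemma step_spec a w u v :
  [set w; u] \in E -> [set u; v] \in E -> [set u; v] != [set w; u] ->
  q [set u; v] u != 0 ->
  (Qf E q [set w; u] u %| q [set w; u] u + a)%Z ->
  q [set u; v] u * step a w u v =
    Qf E (upd q [set w; u] u a) [set u; v] u * Qf E q [set u; v] v - detf E q u v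
  /\ (Qf E q [set u; v] v %| q [set u; v] v + step a w u v)%Z.
Proof.
set eu := [set w; u]; set e := [set u; v].
move=> Heu He Hne Hq0 /dvdzP [k Hk].
have Hue : u \in e by rewrite set21.
have Hueu : u \in eu by rewrite set22.
set P := \prod_(e' in E | [&& u \in e', e' != e & e' != eu]) q e' u.
have Q1 : Qf E q eu u = q e u * P by rewrite (Qf_split q He Hue Hne).
have Hne' : eu != e by rewrite eq_sym.
have Q2 : Qf E (upd q eu u a) e u = a * P.
  rewrite (Qf_split _ Heu Hueu Hne') /upd !eqxx /=; congr (_ * _).
  apply: eq_big => [i | i /andP[_ /and3P[_ Hi _]]].
    by case: (i \in E); case: (u \in i); case: (i != e); case: (i != eu).
  by rewrite (negbTE Hi).
have Q3 : Qf E q e u = q eu u * P.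
  rewrite (Qf_split _ Heu Hueu Hne'); congr (_ * _); apply: eq_bigl => i.
  by case: (i \in E); case: (u \in i); case: (i != e); case: (i != eu).
have Ha : a = k * (q e u * P) - q eu u by rewrite -Q1 -Hk; ring.
have N : Qf E (upd q eu u a) e u * Qf E q e v - detf E q u v =
         q e u * (k * P * P * Qf E q e v - q e v).
  rewrite /detf -/e Q2 Q3 Ha; ring.
have S : step a w u v = k * P * P * Qf E q e v - q e v.
  by rewrite /step -/eu -/e N mulKz.
split; first by rewrite N S.
by rewrite S; apply/dvdzP; exists (k * P * P); ring.
Qed.

Lemma qval_dvd n v : (size (gam v) <= n)%N -> v \in V -> v != eta ->
  (Qf E q [set par v; v] v %| q [set par v; v] v + qval v)%Z.
Proof.
elim: n v => [|n IH] v Hs vV vn.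
  have vC : v \in C by rewrite inE vV.
  by have [s0 Hs0] := gam_cons tree etaC vC; move: Hs; rewrite Hs0.
have vC : v \in C by rewrite inE vV.
have [H1 H2 H3 H4] := par_spec tree etaC vC vn.
case: (eqVneq (par v) eta) => Hp.
  by rewrite qval_rec1 // Hp addrC subrK dvdzz.
have uV := par_V vC vn Hp.
have Hsu : (size (gam (par v)) <= n)%N by move: Hs; rewrite H1 size_rcons.
have IHu := IH _ Hsu uV Hp.
rewrite qval_rec2 //.
have [G1 G2 G3 G4] := par_spec tree etaC H2 Hp.
have Hne := eu_neq tree etaC vC vn Hp.
apply: (step_spec _ _ _ _ IHu).2 => //; first by rewrite eq_sym.
apply: q_pos => //; first by rewrite set21.
by rewrite eq_sym.
Qed.


Lemma notin_path x (e : {set T}) : x \in V -> x != eta -> x \in e -> e != [set par x; x] ->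
  forall p, path_from_to C E eta x p -> e \notin pedges p.
Proof.
move=> xV xn Hx Hne p Hp.
have xC : x \in C by rewrite inE xV.
rewrite (gam_uniq tree etaC xC Hp); apply/negP => Hin.
by move: Hne; rewrite (edge_gam_last tree etaC xC xn Hin Hx) eqxx.
Qed.

Lemma gcd_helper v e' : v \in V -> v != eta -> e' \in E -> v \in e' ->
  e' != [set par v; v] -> gcdz (qval v) (q e' v) = 1.
Proof.
move=> vV vn He' Hv Hne.
have vC : v \in C by rewrite inE vV.
have [H1 H2 H3 H4] := par_spec tree etaC vC vn.
have /dvdzP [k Hk] := qval_dvd (leqnn _) vV vn.
rewrite (Qf_split q He' Hv) in Hk; last by rewrite Hne.
set R := \prod_(_ in _ | _) _ in Hk.
have -> : qval v = (k * R) * q e' v + - q [set par v; v] v.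
  by apply: (addrI (q [set par v; v] v)); rewrite Hk; ring.
rewrite gcdzC gcdzMDl gcdzN gcdzC.
have [_ [_ [_ [_ Hg]]]] := Hdec.
by apply: (Hg v [set par v; v] e') => //; rewrite ?set22 // eq_sym.
Qed.

Lemma det_lemma v : v \in V -> v != eta -> par v \in V -> par v != eta ->
  detf E qs (par v) v = - detf E q (par v) v.
Proof.
move=> vV vn uV un.
have vC : v \in C by rewrite inE vV.
have [H1 H2 H3 H4] := par_spec tree etaC vC vn.
have [G1 G2 G3 G4] := par_spec tree etaC H2 un.
have Hne := eu_neq tree etaC vC vn un.
have E1 : qs [set par v; v] (par v) = q [set par v; v] (par v).
  by rewrite /qs uV un /= eq_sym (negbTE Hne).
have E2 : qs [set par v; v] v = qval v by rewrite /qs vV vn eqxx.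
have E3 : Qf E qs [set par v; v] v = Qf E q [set par v; v] v.
  by apply: Qf_eq => e' _ _ Hn; rewrite /qs vV vn /= (negbTE Hn).
have E4 : Qf E qs [set par v; v] (par v) =
          Qf E (upd q [set par (par v); par v] (par v) (qval (par v))) [set par v; v] (par v).
  by apply: Qf_eq => e' _ _ _; rewrite /qs /upd uV un eqxx andbT.
have Hq0 : q [set par v; v] (par v) != 0.
  by apply: q_pos => //; [rewrite set21 | rewrite eq_sym].
have Hne' : [set par v; v] != [set par (par v); par v] by rewrite eq_sym.
have [S1 _] := step_spec G3 H3 Hne' Hq0 (qval_dvd (leqnn _) uV un).
rewrite {1}/detf /= E1 E2 E3 E4 (qval_rec2 vC vn un) S1; ring.
Qed.

Lemma uniq_par (qs' : {set T} -> T -> int) :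
  (forall v e, v \in V -> v != eta -> e \in E -> v \in e ->
     (forall p, path_from_to C E eta v p -> e \notin pedges p) ->
     qs' e v = q e v) ->
  (forall v, v \in V -> [set eta; v] \in E ->
     qs' [set eta; v] v = Qf E q [set eta; v] v - q [set eta; v] v) ->
  (forall u v, u \in V -> v \in V -> u != eta -> v != eta ->
     [set u; v] \in E -> detf E qs' u v = - detf E q u v) ->
  forall n v, (size (gam v) <= n)%N -> v \in V -> v != eta ->
  qs' [set par v; v] v = qval v.
Proof.
move=> Hiii Hiv Hv; elim=> [|n IH] v Hs vV vn.
  have vC : v \in C by rewrite inE vV.
  by have [s0 Hs0] := gam_cons tree etaC vC; move: Hs; rewrite Hs0.
have vC : v \in C by rewrite inE vV.
have [H1 H2 H3 H4] := par_spec tree etaC vC vn.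
case: (eqVneq (par v) eta) => Hp.
  by rewrite qval_rec1 // Hp; apply: Hiv => //; rewrite -Hp.
have uV := par_V vC vn Hp.
have Hsu : (size (gam (par v)) <= n)%N by move: Hs; rewrite H1 size_rcons.
have IHu := IH _ Hsu uV Hp.
have [G1 G2 G3 G4] := par_spec tree etaC H2 Hp.
have Hne := eu_neq tree etaC vC vn Hp.
have Hne' : [set par v; v] != [set par (par v); par v] by rewrite eq_sym.
have E1 : qs' [set par v; v] (par v) = q [set par v; v] (par v).
  by apply: Hiii => //; [rewrite set21 | apply: notin_path => //; rewrite set21].
have E3 : Qf E qs' [set par v; v] v = Qf E q [set par v; v] v.
  by apply: Qf_eq => e' He' Hv' Hn; apply: Hiii => //; apply: notin_path.
have E4 : Qf E qs' [set par v; v] (par v) =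
          Qf E (upd q [set par (par v); par v] (par v) (qval (par v))) [set par v; v] (par v).
  apply: Qf_eq => e' He' Hu' _; rewrite /upd eqxx andbT.
  case: eqP => [-> // | /eqP Hn].
  by apply: Hiii => //; apply: notin_path.
have Hq0 : q [set par v; v] (par v) != 0.
  by apply: q_pos => //; rewrite set21.
have [S1 _] := step_spec G3 H3 Hne' Hq0 (qval_dvd (leqnn _) uV Hp).
have D := Hv _ _ uV vV Hp vn H3.
rewrite {1}/detf /= E1 E3 E4 in D.
apply: (mulfI Hq0); rewrite (qval_rec2 vC vn Hp) S1.
by apply/eqP; rewrite -subr_eq0; apply/eqP; move: D => /eqP; rewrite -subr_eq0 => /eqP D;
   rewrite -D; ring.
Qed.

Lemma main_sec :
  let C := V :|: A in
  let conds := fun qs : {set T} -> T -> int =>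
    [/\ decorated V A E f qs,
        (forall e, e \in E -> eta \in e -> qs e eta = q e eta),
        (forall v e, v \in V -> v != eta -> e \in E -> v \in e ->
           (forall p, path_from_to C E eta v p -> e \notin pedges p) ->
           qs e v = q e v),
        (forall v, v \in V -> [set eta; v] \in E ->
           qs [set eta; v] v = Qf E q [set eta; v] v - q [set eta; v] v) &
        (forall u v, u \in V -> v \in V -> u != eta -> v != eta ->
           [set u; v] \in E -> detf E qs u v = - detf E q u v)] in
  exists qs,
    [/\ conds qs,
        (forall qs', conds qs' -> forall e x, e \in E -> x \in e -> qs' e x = qs e x) &
        (forall v p e, v \in V -> v != eta -> path_from_to C E eta v p ->
           e \in pedges p -> v \in e ->
           (Qf E q e v %| q e v + qs e v)%Z)].
Proof.
move=> Cc conds.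
have [Hdis [Htr [Har [Hq1 Hgcd]]]] := Hdec.
have condsqs : conds qs.
  split.
  - split => //; split => //; split => //; split.
      by move=> a e aA He Ha; rewrite /qs (disjointFl Hdis aA) /=; apply: Hq1.
    move=> v e e' vV He He' Hv Hv' Hne; rewrite /qs vV /=.
    case: (eqVneq v eta) => [Hve | vn].
      by rewrite /=; apply: Hgcd.
    rewrite /=.
    case: (eqVneq e [set par v; v]) => [He1 | He1] /=;
      case: (eqVneq e' [set par v; v]) => [He2 | He2] /=.
    + by move: Hne; rewrite He1 He2 eqxx.
    + by apply: gcd_helper.
    + by rewrite gcdzC; apply: gcd_helper.
    + by apply: Hgcd.
  - by move=> e He Hx; rewrite /qs eqxx /= andbF.
  - move=> v e vV vn He Hv Hnot; rewrite /qs vV vn /=.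
    case: eqP => // Heq; exfalso.
    have vC : v \in C by rewrite inE vV.
    by move: (Hnot _ (gamP tree etaC vC)); rewrite Heq lastedge_in.
  - move=> v vV He.
    have vn : v != eta by apply/eqP => Hve; move: He; rewrite Hve (negbTE (edge_neq tree _)).
    have [_ _ Hp _] := child tree etaC etaC He (set21 _ _) (set22 _ _) vn (introT orP (or_introl (eqxx _))).
    have vC : v \in C by rewrite inE vV.
    by rewrite /qs vV vn Hp eqxx /= qval_rec1.
  - move=> u v uV vV un vn He.
    have uC : u \in C by rewrite inE uV.
    have vC : v \in C by rewrite inE vV.
    have uv : u != v by apply/eqP => Huv; move: He; rewrite Huv (negbTE (edge_neq tree _)).
    case: (eqVneq [set u; v] [set par v; v]) => Heq.
      have Hpu : par v = u by symmetry; apply: set2_eq Heq uv.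
      by rewrite -Hpu det_lemma // Hpu.
    have [_ _ Hpu _] := child tree etaC vC He (set22 _ _) (set21 _ _) uv (introT orP (or_intror Heq)).
    by rewrite detfC (detfC E q) -Hpu det_lemma // Hpu // eq_sym.
exists qs; split => //.
- move=> qs' [Hd' Hii Hiii Hiv Hv] e x He Hx.
  have xC : x \in C by exact: (edge_C tree He Hx).
  rewrite /qs; case xV: (x \in V) => /=.
    case: (eqVneq x eta) => [Hxe | xn] /=.
      by rewrite Hxe in Hx *; apply: Hii.
    case: eqP => [-> | /eqP Hne].
      by apply: (uniq_par Hiii Hiv Hv (leqnn _)).
    by apply: Hiii => //; apply: notin_path.
  have xA : x \in A by move: xC; rewrite inE xV.
  have [_ [_ [_ [Hq1' _]]]] := Hd'.
  by rewrite (Hq1' _ _ xA He Hx) (Hq1 _ _ xA He Hx).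
- move=> v p e vV vn Hp Hep Hv.
  have vC : v \in C by rewrite inE vV.
  rewrite (gam_uniq tree etaC vC Hp) in Hep.
  rewrite (edge_gam_last tree etaC vC vn Hep Hv) /qs vV vn eqxx /=.
  exact: (qval_dvd (leqnn _) vV vn).
Qed.

End Main.

Unset Implicit Arguments.
Set Strict Implicit.

Theorem lemma6p5 (T : finType) (V A : {set T}) (E : {set {set T}})
    (f : T -> int) (q : {set T} -> T -> int) (eta : T) :
  decorated V A E f q ->
  central V A E q eta ->
  let C := V :|: A in
  let conds := fun qs : {set T} -> T -> int =>
    [/\ decorated V A E f qs,
        (* (ii) *)
        (forall e, e \in E -> eta \in e -> qs e eta = q e eta),
        (* (iii) *)
        (forall v e, v \in V -> v != eta -> e \in E -> v \in e ->
           (forall p, path_from_to C E eta v p -> e \notin pedges p) ->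
           qs e v = q e v),
        (* (iv) *)
        (forall v, v \in V -> [set eta; v] \in E ->
           qs [set eta; v] v = Qf E q [set eta; v] v - q [set eta; v] v) &
        (* (v) *)
        (forall u v, u \in V -> v \in V -> u != eta -> v != eta ->
           [set u; v] \in E -> detf E qs u v = - detf E q u v)] in
  exists qs,
    [/\ conds qs,
        (* uniqueness (of the decoration q* on pairs (e,x) with x in e in E) *)
        (forall qs', conds qs' -> forall e x, e \in E -> x \in e -> qs' e x = qs e x) &
        (* (vi) *)
        (forall v p e, v \in V -> v != eta -> path_from_to C E eta v p ->
           e \in pedges p -> v \in e ->
           (Qf E q e v %| q e v + qs e v)%Z)].
Proof.
move=> H1 H2; exact: (main_sec H1 H2).
Qed.
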